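(* Let $b\in\overline{\mathbb{Q}}\setminus\{0,1\}$ with a fixed logarithm $\ln b$. If there is a ladder to $\xi\in\mathbb{C}$ (with respect to $b$), then there is a ladder $a_1,\dots,a_m$ to $\xi$ (obtainable as a subsequence of the given one) such that $1,a_1,\dots,a_m$ are linearly independent over $\mathbb{Q}$.
   Context: $b^x:=e^{x\ln b}$ for the fixed nonzero value $\ln b$. $\overline{F}$ denotes the algebraic closure in $\mathbb{C}$ of a field $F$; $\overline{\mathbb{Q}}$ is the field of algebraic numbers. Ladder: for $a_1,\dots,a_m\in\mathbb{C}$ put $F_0:=\mathbb{Q}$ and $F_k:=\mathbb{Q}(a_1,\dots,a_k,b^{a_1},\dots,b^{a_k})$. The sequence is a ladder if for every $1\le k\le m$, $a_k\in\overline{F_{k-1}}$ or $b^{a_k}\in\overline{F_{k-1}}$; it is a ladder to $\xi$ if $\xi\in\overline{F_m}$. A ladder with $1,a_1,\dots,a_m$ linearly independent over $\mathbb{Q}$ is called reduced. *)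

(* Defs.v *)
From HB Require Import structures.
From mathcomp Require Import all_boot all_order all_algebra.
From mathcomp Require Import complex.
From mathcomp Require Import all_classical all_reals all_analysis.
Set Implicit Arguments. Unset Strict Implicit. Unset Printing Implicit Defensive.
Import Order.TTheory GRing.Theory Num.Theory.
Local Open Scope ring_scope.
Local Open Scope complex_scope.

Section Defs.
Variable R : realType.
Local Notation C := R[i].

Definition cexp (z : C) : C :=
  (expR (complex.Re z) * cos (complex.Im z)) +i* (expR (complex.Re z) * sin (complex.Im z)).

Definition bpow (lnb x : C) : C := cexp (x * lnb).

(* x lies in the subfield Q(S) of C generated by the finite list S:
   x belongs to every subfield of C containing S. *)
Definition in_gen_field (S : seq C) (x : C) : Prop :=
  forall P : C -> Prop,
    (forall s, s \in S -> P s) ->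
    P 0 -> P 1 ->
    (forall u v, P u -> P v -> P (u + v)) ->
    (forall u, P u -> P (- u)) ->
    (forall u v, P u -> P v -> P (u * v)) ->
    (forall u, P u -> u != 0 -> P (u^-1)) ->
    P x.

Definition in_alg_closure (S : seq C) (z : C) : Prop :=
  exists p : {poly C}, p != 0 /\ (forall i, in_gen_field S p`_i) /\ root p z.

(* generators of F_k = Q(a_1..a_k, b^a_1..b^a_k), for the prefix s = [a_1..a_k] *)
Definition ladder_gens (lnb : C) (s : seq C) : seq C := s ++ map (bpow lnb) s.

Definition is_ladder (lnb : C) (a : seq C) : Prop :=
  forall k, (k < size a)%N ->
    in_alg_closure (ladder_gens lnb (take k a)) (nth 0 a k) \/
    in_alg_closure (ladder_gens lnb (take k a)) (bpow lnb (nth 0 a k)).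

Definition ladder_to (lnb : C) (a : seq C) (xi : C) : Prop :=
  is_ladder lnb a /\ in_alg_closure (ladder_gens lnb a) xi.

Definition Q_lin_indep (s : seq C) : Prop :=
  forall c : 'I_(size s) -> rat,
    \sum_(i < size s) (ratr (c i) : C) * s`_i = 0 -> forall i, c i = 0.

End Defs.

(* Main.v *)
Require Import Defs.
From HB Require Import structures.
From mathcomp Require Import all_boot all_order all_algebra.
From mathcomp Require Import complex.
From mathcomp Require Import all_classical all_reals all_analysis.
From mathcomp Require Import ring lra.
Set Implicit Arguments. Unset Strict Implicit. Unset Printing Implicit Defensive.
Import Order.TTheory GRing.Theory Num.Theory.
Local Open Scope ring_scope.
Local Open Scope complex_scope.

Section Sub.
Variable R : realType.
Local Notation C := R[i].
Variable S : seq C.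

Definition gfp : {pred C} := fun x => `[< in_gen_field S x >].

Lemma gfpP x : reflect (in_gen_field S x) (x \in gfp).
Proof. exact: asboolP. Qed.

Lemma gfp_divring : GRing.divring_closed gfp.
Proof.
split.
- by apply/gfpP => P _ _ P1.
- move=> u v /gfpP hu /gfpP hv; apply/gfpP => P hS h0 h1 hD hN hM hV.
  have := hu P hS h0 h1 hD hN hM hV; have := hv P hS h0 h1 hD hN hM hV.
  by move=> Hv Hu; apply: hD => //; apply: hN.
- move=> u v /gfpP hu /gfpP hv; apply/gfpP => P hS h0 h1 hD hN hM hV.
  have [->|v0] := eqVneq v 0; first by rewrite invr0 mulr0; apply: h0.
  have := hu P hS h0 h1 hD hN hM hV; have := hv P hS h0 h1 hD hN hM hV.
  by move=> Hv Hu; apply: hM => //; apply: hV.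
Qed.

HB.instance Definition _ := GRing.isDivringClosed.Build C gfp gfp_divring.

Inductive B := mkB x & x \in gfp.
Definition vB u := let: mkB x _ := u in x.

HB.instance Definition _ := [isSub for vB].
HB.instance Definition _ := [Choice of B by <:].
HB.instance Definition _ := [SubChoice_isSubComUnitRing of B by <:].
HB.instance Definition _ := [SubComUnitRing_isSubIntegralDomain of B by <:].
HB.instance Definition _ := [SubIntegralDomain_isSubField of B by <:].

Definition vBm : {rmorphism B -> C} := val.

Lemma clE z : in_alg_closure S z <-> algebraicOver vBm z.
Proof.
split.
- case=> p [p0 [pc rz]].
  pose q : {poly B} := \poly_(i < size p) insubd (0 : B) p`_i.
  have mq : map_poly vBm q = p.
    apply/polyP => i; rewrite coef_map coef_poly /=.
    case: ifP => hi; last by rewrite nth_default // leqNgt hi.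
    by rewrite val_insubd; case: ifP => // /negbT/gfpP[]; apply: pc.
  exists q; last by rewrite mq.
  by apply: contra p0 => /eqP q0; rewrite -mq q0 map_poly0.
- case=> q q0 rz; exists (map_poly vBm q); split; first by rewrite map_poly_eq0.
  split => // i; rewrite coef_map /=; apply/gfpP; exact: valP.
Qed.

Lemma cl_gen x : in_gen_field S x -> in_alg_closure S x.
Proof.
move=> /gfpP hx; apply/clE.
have -> : x = vBm (Sub x hx : B) by [].
exact: algebraic_id.
Qed.

End Sub.

Section Cl.
Variable R : realType.
Local Notation C := R[i].
Variable S : seq C.
Local Notation cl := (in_alg_closure S).

Lemma cl_mem s : s \in S -> cl s.
Proof. by move=> hs; apply: cl_gen => P hP *; exact: hP. Qed.
Lemma cl0 : cl 0. Proof. by apply: cl_gen => P _ h0 *. Qed.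
Lemma cl1 : cl 1. Proof. by apply: cl_gen => P _ _ h1 *. Qed.
Lemma clD u v : cl u -> cl v -> cl (u + v).
Proof. by move=> /clE hu /clE hv; apply/clE; apply: algebraic_add. Qed.
Lemma clN u : cl u -> cl (- u).
Proof. by move=> /clE hu; apply/clE; apply: algebraic_opp. Qed.
Lemma clM u v : cl u -> cl v -> cl (u * v).
Proof. by move=> /clE hu /clE hv; apply/clE; apply: algebraic_mul. Qed.
Lemma clV u : cl u -> cl (u^-1).
Proof. by move=> /clE hu; apply/clE; apply: algebraic_inv. Qed.
Lemma clX u n : cl u -> cl (u ^+ n).
Proof. by move=> hu; elim: n => [|n IH]; [rewrite expr0; apply: cl1 | rewrite exprS; apply: clM]. Qed.
Lemma clrat q : cl (ratr q).
Proof.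
apply/clE; rewrite -(fmorph_rat (vBm S)); exact: algebraic_id.
Qed.

Lemma cl_root (p : {poly C}) z : p != 0 -> (forall i, cl p`_i) -> root p z -> cl z.
Proof.
move=> p0 pc rz; apply/clE/integral_algebraic.
apply: integral_root p0 rz _; apply/integral_poly => i.
by apply/integral_algebraic/clE.
Qed.
End Cl.

Lemma cl_trans (R : realType) (S T : seq R[i]) z :
  (forall s, s \in T -> in_alg_closure S s) -> in_alg_closure T z -> in_alg_closure S z.
Proof.
move=> hT [p [p0 [pc rz]]]; apply: (cl_root p0 _ rz) => i.
apply: (pc i (in_alg_closure S)) => //.
- exact: cl0.
- exact: cl1.
- exact: clD.
- exact: clN.
- exact: clM.
- by move=> u hu _; apply: clV.
Qed.

Lemma cl_mono (R : realType) (S T : seq R[i]) z :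
  {subset T <= S} -> in_alg_closure T z -> in_alg_closure S z.
Proof. by move=> sub; apply: cl_trans => s /sub; apply: cl_mem. Qed.
Section Cexp.
Variable R : realType.
Local Notation C := R[i].

Lemma cexpD (u v : C) : cexp (u + v) = cexp u * cexp v.
Proof.
case: u => a b; case: v => c d; rewrite /cexp /=.
rewrite expRD cosD sinD; apply/eqP; rewrite eq_complex /=; apply/andP; split; apply/eqP; ring.
Qed.

Lemma cexp0 : cexp (0 : C) = 1.
Proof. by rewrite /cexp /= expR0 cos0 sin0 mul1r mulr0. Qed.

Lemma cexp_neq0 (u : C) : cexp u != 0.
Proof.
apply/negP => /eqP h; have := cexpD u (- u); rewrite subrr cexp0 h mul0r.
by move/eqP; rewrite oner_eq0.
Qed.

Lemma cexpN (u : C) : cexp (- u) = (cexp u)^-1.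
Proof.
apply: (mulfI (cexp_neq0 u)); rewrite -cexpD subrr cexp0 mulfV //; exact: cexp_neq0.
Qed.

Lemma cexpMn (u : C) n : cexp (n%:R * u) = cexp u ^+ n.
Proof.
elim: n => [|n IH]; first by rewrite mul0r cexp0 expr0.
by rewrite -addn1 natrD mulrDl mul1r cexpD IH exprD expr1.
Qed.
End Cexp.

Section Main.
Variable R : realType.
Local Notation C := R[i].
Variable lnb : C.

Lemma cl_cexp_rat (G : seq C) (w : C) q :
  in_alg_closure G (cexp w) -> in_alg_closure G (cexp (ratr q * w)).
Proof.
move=> hw.
have [k hk] : exists k, denq q = (k.+1)%:Z.
  have := denq_gt0 q; case: (denq q) => [[|k]|k] //= _; by exists k.
have hz : cexp (ratr q * w) ^+ k.+1 = cexp ((numq q)%:~R * w).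
  rewrite -cexpMn; congr (cexp _); rewrite mulrA; congr (_ * w).
  have -> : (k.+1%:R : C) = (denq q)%:~R by rewrite hk.
  by rewrite mulrC /ratr divfK // intr_eq0 denq_neq0.
have hc : in_alg_closure G (cexp (ratr q * w) ^+ k.+1).
  rewrite hz; case: (numq q) => m.
    by have -> : ((Posz m)%:~R : C) = m%:R by []; rewrite cexpMn; apply: clX.
  rewrite NegzE mulrNz mulNr cexpN; apply: clV.
  by have -> : ((Posz m.+1)%:~R : C) = m.+1%:R by []; rewrite cexpMn; apply: clX.
apply: (@cl_root _ G ('X^(k.+1) - (cexp (ratr q * w) ^+ k.+1)%:P)).
- by apply: monic_neq0; apply: monicXnsubC.
- move=> i; rewrite coefB coefXn coefC; apply: clD.
    by case: (_ == _); [apply: cl1 | apply: cl0].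
  by apply: clN; case: (_ == _) => //; apply: cl0.
- by rewrite rootE !hornerE subrr.
Qed.

Definition good (G : seq C) (y : C) :=
  in_alg_closure G y /\ in_alg_closure G (bpow lnb y).

Lemma good0 G : good G 0.
Proof. by split; [apply: cl0 | rewrite /bpow mul0r cexp0; apply: cl1]. Qed.

Lemma goodD G u v : good G u -> good G v -> good G (u + v).
Proof.
move=> [h1 h2] [h3 h4]; split; first exact: clD.
by rewrite /bpow mulrDl cexpD; apply: clM.
Qed.

Lemma goodZ G q y : good G y -> good G (ratr q * y).
Proof.
move=> [h1 h2]; split; first by apply: clM => //; apply: clrat.
by rewrite /bpow -mulrA; apply: cl_cexp_rat.
Qed.

Lemma goodsum G n (c : nat -> rat) (f : nat -> C) :
  (forall i, (i < n)%N -> good G (f i)) ->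
  good G (\sum_(i < n) ratr (c i) * f i).
Proof.
move=> hf; elim/big_ind: _ => //; first exact: good0.
- by move=> x y; apply: goodD.
- by move=> i _; apply: goodZ; apply: hf.
Qed.

End Main.

Lemma QliP (R : realType) (s : seq R[i]) :
  Q_lin_indep s <-> (forall c : nat -> rat,
    \sum_(i < size s) (ratr (c i) : R[i]) * s`_i = 0 ->
    forall i, (i < size s)%N -> c i = 0).
Proof.
split.
- move=> H c hc i hi; exact: (H (fun j : 'I_(size s) => c j) hc (Ordinal hi)).
- move=> H c hc i.
  pose c' n := oapp c 0 (insub n).
  have E j : c' (val j) = c j by rewrite /c' valK.
  rewrite -E; apply: H (ltn_ord i).
  by rewrite -[RHS]hc; apply: eq_bigr => j _; rewrite E.
Qed.

Section Ladder.
Variable R : realType.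
Local Notation C := R[i].
Variable lnb : C.
Local Notation gens := (ladder_gens lnb).

Lemma ladder_rcons_inv a x : is_ladder lnb (rcons a x) ->
  is_ladder lnb a /\
  (in_alg_closure (gens a) x \/ in_alg_closure (gens a) (bpow lnb x)).
Proof.
move=> H; split.
- move=> k hk; have hk' : (k < size (rcons a x))%N by rewrite size_rcons ltnS ltnW.
  have := H k hk'; rewrite -cats1 takel_cat ?(ltnW hk) // nth_cat hk; exact.
- have hk' : (size a < size (rcons a x))%N by rewrite size_rcons.
  have := H _ hk'; rewrite -cats1 take_size_cat // nth_cat ltnn subnn; exact.
Qed.

Lemma ladder_rcons a x : is_ladder lnb a ->
  (in_alg_closure (gens a) x \/ in_alg_closure (gens a) (bpow lnb x)) ->
  is_ladder lnb (rcons a x).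
Proof.
move=> H hx k; rewrite size_rcons ltnS leq_eqVlt => /orP[/eqP ->|hk].
- by rewrite -cats1 take_size_cat // nth_cat ltnn subnn.
- by rewrite -cats1 takel_cat ?(ltnW hk) // nth_cat hk; apply: H.
Qed.

Lemma gens_rcons a x y : y \in gens (rcons a x) ->
  [\/ y \in gens a, y = x | y = bpow lnb x].
Proof.
rewrite /ladder_gens map_rcons !mem_cat !mem_rcons !in_cons.
case/orP => /orP[/eqP ->|h]; [by constructor 2 | by constructor 1; rewrite h |
  by constructor 3 | by constructor 1; rewrite h orbT].
Qed.

Lemma gens_sub a x : {subset gens a <= gens (rcons a x)}.
Proof.
move=> y; rewrite /ladder_gens map_rcons !mem_cat !mem_rcons !in_cons.
by case/orP => ->; rewrite ?orbT.
Qed.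

Lemma gens_x a x : x \in gens (rcons a x).
Proof. by rewrite /ladder_gens mem_cat mem_rcons mem_head. Qed.

Lemma gens_bx a x : bpow lnb x \in gens (rcons a x).
Proof. by rewrite /ladder_gens map_rcons mem_cat !mem_rcons !in_cons eqxx !orbT. Qed.

Variable b : C.
Hypothesis hb : in_alg_closure [::] b.
Hypothesis hlnb : cexp lnb = b.

Lemma main a : is_ladder lnb a -> exists a' : seq C,
  [/\ subseq a' a, is_ladder lnb a', Q_lin_indep (1 :: a') &
    forall y, y \in gens a -> in_alg_closure (gens a') y].
Proof.
elim/last_ind: a => [|a x IH].
  move=> _; exists [::]; split => //.
  apply/QliP => c /= hc i; rewrite ltnS leqn0 => /eqP ->.
  move: hc; rewrite big_ord_recl big_ord0 addr0 /= mulr1.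
  by move/eqP; rewrite fmorph_eq0 => /eqP.
move=> /ladder_rcons_inv [la hx].
have [a' [sa la' qa ga]] := IH la.
have clx : forall y, in_alg_closure (gens a) y -> in_alg_closure (gens a') y.
  by move=> y; apply: cl_trans.
have [qi|qd] := boolP `[< Q_lin_indep (1 :: rcons a' x) >].
- move/asboolP: qi => qi.
  exists (rcons a' x); split => //.
  + by rewrite -!cats1; apply: cat_subseq.
  + by apply: ladder_rcons => //; case: hx => h; [left|right]; apply: clx.
  + move=> y /gens_rcons [h|->|->].
    * exact: (cl_mono (@gens_sub a' x) (ga y h)).
    * by apply: cl_mem; apply: gens_x.
    * by apply: cl_mem; apply: gens_bx.
- move/asboolP: qd => qd.
  have gs : forall i, (i < (size a').+1)%N -> good lnb (gens a') (1 :: a')`_i.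
    case=> [|i] /=.
      move=> _; split; first exact: cl1.
      by rewrite /bpow mul1r hlnb; apply: cl_mono hb => ?; rewrite in_nil.
    rewrite ltnS => hi; split; apply: cl_mem; rewrite /ladder_gens mem_cat.
      by rewrite mem_nth.
    by rewrite (map_f (bpow lnb) (mem_nth 0 hi)) orbT.
  have gx : good lnb (gens a') x.
    apply: contrapT => ngx; apply: qd; apply/QliP => c hc i hi.
    move: hc; rewrite /= -cats1 size_cat /= addn1 big_ord_recr /=.
    have Elast : (a' ++ [:: x])`_(size a') = x by rewrite nth_cat ltnn subnn.
    rewrite Elast.
    have Enth : forall j : 'I_(size a').+1,
      (1 :: (a' ++ [:: x]))`_j = (1 :: a')`_j.
      by case=> [[|j] hj] //=; rewrite ltnS in hj; rewrite nth_cat hj.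
    under eq_bigr => j _ do rewrite Enth.
    move=> hsum.
    have [cl0'|cln0] := eqVneq (c (size a').+1) 0.
      move: hsum; rewrite cl0' rmorph0 mul0r addr0 => hsum.
      have hQ := (proj1 (QliP _) qa) c hsum.
      move: hi; rewrite /= size_rcons ltnS leq_eqVlt => /orP[/eqP ->//|hi]; exact: hQ.
    exfalso; apply: ngx.
    have -> : x = ratr (- (c (size a').+1)^-1) *
       \sum_(j < (size a').+1) ratr (c j) * (1 :: a')`_j.
      rewrite rmorphN fmorphV mulNr -mulrN; apply: (mulfI (x := ratr (c (size a').+1))).
        by rewrite fmorph_eq0.
      rewrite mulrA mulfV ?fmorph_eq0 // mul1r.
      by apply/eqP; rewrite -addr_eq0 addrC hsum.
    by apply: goodZ; apply: goodsum.
  exists a'; split => //.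
  + by apply: subseq_trans sa _; rewrite -cats1 prefix_subseq.
  + move=> y /gens_rcons [h|->|->]; [exact: ga | exact: gx.1 | exact: gx.2].
Qed.
End Ladder.

Theorem lemma11p3 (R : realType) (b lnb xi : R[i]) (a : seq R[i]) :
  in_alg_closure [::] b -> b != 0 -> b != 1 -> cexp lnb = b ->
  ladder_to lnb a xi ->
  exists a' : seq R[i],
    subseq a' a /\ ladder_to lnb a' xi /\ Q_lin_indep (1 :: a').
Proof.
move=> hb _ _ hlnb [la hxi].
have [a' [sa la' qa ga]] := main hb hlnb la.
exists a'; split => //; split => //.
split => //; exact: (cl_trans ga hxi).
Qed.
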